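(* Let $((\beta_\ell,B_\ell))_{\ell\ge1}$ be a sequence with $\beta_\ell$ and $B_\ell$ non-increasing, $\beta_\ell\ge\beta_c$, $B_\ell>0$, $\beta_\ell\searrow\beta_c$ and $B_\ell\searrow0$. Then $\lim_{\ell\to\infty}z^*(\beta_\ell,B_\ell)=0$. In particular $\lim_{B\searrow0}z^*(\beta_c,B)=0$ and $\lim_{\beta\searrow\beta_c}z^*(\beta,0^+)=0$, where $z^*(\beta,0^+)=\lim_{B\searrow0}z^*(\beta,B)$.
   Context: $W\ge0$ is a random variable with $\mathbb E[W^2]<\infty$ and $\mathbb E[W]>0$; $\nu=\mathbb E[W^2]/\mathbb E[W]$, $\beta_c={\rm asinh}(1/\nu)$, $\alpha(\beta)=\sqrt{\sinh(\beta)/\mathbb E[W]}$. For $B>0$, $z^*(\beta,B)$ denotes the unique positive solution $z$ of $z=\mathbb E[\tanh(\alpha(\beta)Wz+B)\,\alpha(\beta)W]$; it is non-negative and monotone (non-decreasing) in $\beta$ and $B$. *)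

(* Defs.v *)
From Stdlib Require Import Reals Lra.
Open Scope R_scope.

(* The law of the random variable W >= 0 is encoded by its quantile function
   Q : (0,1) -> [0,oo), nondecreasing; W has the law of Q(U), U uniform on (0,1).
   Every law on [0,oo) arises this way. *)
Definition quantile (Q : R -> R) : Prop :=
  (forall u, 0 < u < 1 -> 0 <= Q u) /\
  (forall u v, 0 < u -> u <= v -> v < 1 -> Q u <= Q v).

Definition lsum (f : R -> R) (a b : R) (n : nat) : R :=
  sum_f_R0 (fun k => (b - a) / INR (S n) * f (a + INR k * (b - a) / INR (S n))) n.

Definition lsums (Q : R -> R) (h : R -> R) (x : R) : Prop :=
  exists a b n, 0 < a /\ a <= b /\ b < 1 /\ x = lsum (fun u => h (Q u)) a b n.

(* Expect Q h e  <->  E[h(W)] = e (finite), for h nonnegative and nondecreasing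
   on [0,oo): then E[h(W)] = int_0^1 h(Q u) du, the (improper) integral of a
   nonnegative nondecreasing function, which equals the sup of these sums. *)
Definition Expect (Q : R -> R) (h : R -> R) (e : R) : Prop :=
  is_lub (lsums Q h) e.

(* m1 = E[W] *)
Definition betac (m1 m2 : R) : R := arcsinh (1 / (m2 / m1)).
Definition alpha (m1 beta : R) : R := sqrt (sinh beta / m1).

(* z is a positive solution of z = E[tanh(alpha(beta) W z + B) alpha(beta) W];
   by the context this solution is unique, i.e. z = z^*(beta,B). *)
Definition Zstar (Q : R -> R) (m1 beta B z : R) : Prop :=
  0 < z /\
  Expect Q (fun w => tanh (alpha m1 beta * w * z + B) * alpha m1 beta * w) z.

(* Main.v *)
Require Import Defs.
From Stdlib Require Import Reals Lra Psatz Lia Classical ClassicalEpsilon.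
From Coquelicot Require Import Coquelicot.
Open Scope R_scope.

Lemma tanh_exp x : tanh x = (exp x - exp (-x)) / (exp x + exp (-x)).
Proof. unfold tanh, sinh, cosh. assert (0 < exp x) by apply exp_pos. assert (0 < exp (-x)) by apply exp_pos. field. lra. Qed.

Lemma tanh_der x : is_derive tanh x (1 - tanh x ^ 2).
Proof.
  apply (is_derive_ext (fun x => (exp x - exp (-x)) / (exp x + exp (-x)))).
  { intros t; symmetry; apply tanh_exp. }
  assert (0 < exp x) by apply exp_pos. assert (0 < exp (-x)) by apply exp_pos.
  auto_derive. lra. rewrite tanh_exp. field. lra.
Qed.

Lemma tanh_bnd x : -1 < tanh x < 1.
Proof.
  rewrite tanh_exp. assert (0 < exp x) by apply exp_pos. assert (0 < exp (-x)) by apply exp_pos.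
  assert (0 < / (exp x + exp (-x))) by (apply Rinv_0_lt_compat; lra).
  split.
  - assert (tanh_h : (exp x - exp (-x)) / (exp x + exp (-x)) + 1 = 2 * exp x * / (exp x + exp (-x))) by (field; lra).
    assert (0 < 2 * exp x * / (exp x + exp (-x))) by (apply Rmult_lt_0_compat; lra). lra.
  - assert (tanh_h : 1 - (exp x - exp (-x)) / (exp x + exp (-x)) = 2 * exp (-x) * / (exp x + exp (-x))) by (field; lra).
    assert (0 < 2 * exp (-x) * / (exp x + exp (-x))) by (apply Rmult_lt_0_compat; lra). lra.
Qed.

Lemma tanh_0 : tanh 0 = 0.
Proof. unfold tanh. rewrite sinh_0. unfold Rdiv; ring. Qed.

Lemma tanh_nonneg x : 0 <= x -> 0 <= tanh x.
Proof.
  intros Hx. rewrite tanh_exp. assert (0 < exp x) by apply exp_pos. assert (0 < exp (-x)) by apply exp_pos.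
  assert (exp (-x) <= exp x) by (destruct (Req_dec x 0) as [->|Hn]; [rewrite Ropp_0; lra| left; apply exp_increasing; lra]).
  unfold Rdiv; apply Rmult_le_pos; [lra|]. left; apply Rinv_0_lt_compat; lra.
Qed.

Lemma tanh_pos x : 0 < x -> 0 < tanh x.
Proof.
  intros Hx. rewrite tanh_exp. assert (0 < exp x) by apply exp_pos. assert (0 < exp (-x)) by apply exp_pos.
  assert (exp (-x) < exp x) by (apply exp_increasing; lra).
  unfold Rdiv; apply Rmult_lt_0_compat; [lra|]. apply Rinv_0_lt_compat; lra.
Qed.

Lemma tanh_le_id x : 0 <= x -> tanh x <= x.
Proof.
  intros Hx.
  destruct (MVT_cor4 (fun t => t - tanh t) (fun t => tanh t ^ 2) 0 x) with (b := x) as [c [Hc _]].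
  - intros c _. apply (is_derive_ext (fun t => t - tanh t)); [reflexivity|].
    replace (tanh c ^ 2) with (1 - (1 - tanh c ^ 2)) by ring.
    apply (is_derive_minus (fun t => t) tanh c 1). exact (is_derive_id (K:=R_AbsRing) c). apply tanh_der.
  - rewrite Rminus_0_r, Rabs_pos_eq; lra.
  - rewrite tanh_0 in Hc. assert (0 <= tanh c ^ 2 * (x - 0)) by (apply Rmult_le_pos; nra). lra.
Qed.

Lemma tanh_lip a b : Rabs (tanh a - tanh b) <= Rabs (a - b).
Proof.
  destruct (MVT_cor4 tanh (fun t => 1 - tanh t ^ 2) b (Rabs (a - b))) with (b := a) as [c [Hc _]].
  - intros c _. apply tanh_der.
  - lra.
  - rewrite Hc, Rabs_mult. pose proof (tanh_bnd c).
    rewrite (Rabs_pos_eq (1 - tanh c ^ 2)) by nra.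
    assert (0 <= Rabs (a - b)) by apply Rabs_pos. nra.
Qed.

Lemma tanh_add_mul a b : tanh (a + b) * (1 + tanh a * tanh b) = tanh a + tanh b.
Proof.
  rewrite !tanh_exp. rewrite Ropp_plus_distr, !exp_plus.
  assert (0 < exp a) by apply exp_pos. assert (0 < exp (-a)) by apply exp_pos.
  assert (0 < exp b) by apply exp_pos. assert (0 < exp (-b)) by apply exp_pos.
  field. split; [|split]; try lra. assert (0 < exp a * exp b) by nra. assert (0 < exp (-a) * exp (-b)) by nra. lra.
Qed.

Lemma tanh_addB x B : 0 <= x -> 0 <= B -> tanh (x + B) <= tanh x + B.
Proof.
  intros Hx HB. pose proof (tanh_add_mul x B).
  pose proof (tanh_nonneg x Hx). pose proof (tanh_nonneg B HB). pose proof (tanh_nonneg (x + B) ltac:(lra)).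
  pose proof (tanh_le_id B HB).
  assert (0 <= tanh (x + B) * (tanh x * tanh B)) by (apply Rmult_le_pos; nra). nra.
Qed.

Lemma tanh_gap eta x : 0 < eta -> 0 <= x ->
  tanh x <= (1 - tanh eta ^ 2) * x + tanh eta ^ 2 * eta.
Proof.
  intros He Hx. pose proof (tanh_bnd eta) as Hb. pose proof (tanh_pos eta He) as Hp.
  pose proof (tanh_le_id eta ltac:(lra)) as Hue.
  destruct (Rle_lt_dec x eta) as [Hle|Hlt].
  - pose proof (tanh_le_id x Hx). nra.
  - pose proof (tanh_add_mul eta (x - eta)) as Ha. replace (eta + (x - eta)) with x in Ha by ring.
    pose proof (tanh_nonneg (x - eta) ltac:(lra)) as Hv0. pose proof (tanh_le_id (x - eta) ltac:(lra)) as Hv1.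
    pose proof (tanh_bnd (x - eta)) as Hvb.
    set (u := tanh eta) in *. set (v := tanh (x - eta)) in *.
    assert (Hd : 0 < 1 + u * v) by nra.
    assert (H1 : tanh x <= u + (1 - u ^ 2) * v).
    { apply (Rmult_le_reg_r (1 + u * v)); [lra|]. rewrite Ha.
      assert (Hu2 : 0 <= 1 - u^2) by nra.
      assert (0 <= (1 - u^2) * u * v * v) by (apply Rmult_le_pos; [apply Rmult_le_pos; [apply Rmult_le_pos|]|]; lra). nra. }
    assert ((1 - u^2) * v <= (1 - u^2) * (x - eta)) by (apply Rmult_le_compat_l; nra).
    nra.
Qed.

Lemma sum_lin3 (X Y : nat -> R) c1 c2 c3 n :
  sum_f_R0 (fun k => c1 * X k + c2 * Y k + c3) n =
  c1 * sum_f_R0 X n + c2 * sum_f_R0 Y n + c3 * INR (S n).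
Proof.
  induction n as [|n IH]; simpl sum_f_R0.
  - simpl. ring.
  - rewrite IH. rewrite (S_INR (S n)). ring.
Qed.

Lemma lsum_lin f f1 f2 c1 c2 c3 a b n :
  (forall u, f u = c1 * f1 u + c2 * f2 u + c3) ->
  lsum f a b n = c1 * lsum f1 a b n + c2 * lsum f2 a b n + c3 * (b - a).
Proof.
  intros H. unfold lsum.
  set (d := (b - a) / INR (S n)).
  set (p := fun k => a + INR k * (b - a) / INR (S n)).
  transitivity (sum_f_R0 (fun k => c1 * (d * f1 (p k)) + c2 * (d * f2 (p k)) + c3 * d) n).
  { apply sum_eq. intros k _. unfold p. rewrite H. ring. }
  rewrite sum_lin3. f_equal. unfold d.
  assert (0 < INR (S n)) by (apply lt_0_INR; lia). field. lra.
Qed.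

Lemma lsum_mono f g a b n :
  a <= b -> (forall u, a <= u <= b -> f u <= g u) -> lsum f a b n <= lsum g a b n.
Proof.
  intros Hab H. unfold lsum. apply sum_Rle. intros k Hk.
  assert (HS : 0 < INR (S n)) by (apply lt_0_INR; lia).
  assert (Hk' : INR k <= INR (S n)) by (apply le_INR; lia).
  assert (0 <= INR k) by apply pos_INR.
  apply Rmult_le_compat_l.
  - unfold Rdiv; apply Rmult_le_pos; [lra|]. left; apply Rinv_0_lt_compat; lra.
  - apply H. split.
    + assert (0 <= INR k * (b - a) / INR (S n)).
      { unfold Rdiv; apply Rmult_le_pos; [nra|]. left; apply Rinv_0_lt_compat; lra. }
      lra.
    + assert (INR k * (b - a) / INR (S n) <= b - a).
      { apply (Rmult_le_reg_r (INR (S n))); [lra|].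
        replace (INR k * (b - a) / INR (S n) * INR (S n)) with (INR k * (b - a)) by (field; lra). nra. }
      lra.
Qed.

Lemma key_ub Q h h1 h2 e1 e2 c1 c2 c3 :
  quantile Q -> 0 <= c1 -> 0 <= c2 -> 0 <= c3 ->
  (forall w, 0 <= w -> h w <= c1 * h1 w + c2 * h2 w + c3) ->
  Expect Q h1 e1 -> Expect Q h2 e2 ->
  forall x, lsums Q h x -> x <= c1 * e1 + c2 * e2 + c3.
Proof.
  intros [HQ0 _] H1 H2 H3 Hp [He1 _] [He2 _].
  intros x [a [b [n [Ha [Hab [Hb ->]]]]]].
  apply Rle_trans with (lsum (fun u => c1 * h1 (Q u) + c2 * h2 (Q u) + c3) a b n).
  { apply lsum_mono; [lra|]. intros u Hu. apply Hp. apply HQ0. lra. }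
  rewrite (lsum_lin _ (fun u => h1 (Q u)) (fun u => h2 (Q u)) c1 c2 c3) by (intros; reflexivity).
  assert (lsum (fun u => h1 (Q u)) a b n <= e1) by (apply He1; exists a, b, n; auto).
  assert (lsum (fun u => h2 (Q u)) a b n <= e2) by (apply He2; exists a, b, n; auto).
  assert (c3 * (b - a) <= c3) by nra.
  apply Rplus_le_compat; [apply Rplus_le_compat|]; try apply Rmult_le_compat_l; auto.
Qed.

Lemma key Q h h1 h2 e e1 e2 c1 c2 c3 :
  quantile Q -> 0 <= c1 -> 0 <= c2 -> 0 <= c3 ->
  (forall w, 0 <= w -> h w <= c1 * h1 w + c2 * h2 w + c3) ->
  Expect Q h e -> Expect Q h1 e1 -> Expect Q h2 e2 ->
  e <= c1 * e1 + c2 * e2 + c3.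
Proof.
  intros HQ H1 H2 H3 Hp [_ He] He1 He2.
  apply He. intros x Hx. eapply key_ub; eauto.
Qed.

Lemma m2_pos Q m1 m2 : quantile Q -> Expect Q (fun w => w) m1 ->
  Expect Q (fun w => w ^ 2) m2 -> 0 < m1 -> 0 < m2.
Proof.
  intros HQ H1 H2 Hp.
  assert (m1 <= 1 / m1 * m2 + 0 * m2 + m1 / 4).
  { apply (key Q (fun w => w) (fun w => w ^ 2) (fun w => w ^ 2)); auto; try lra.
    - left; unfold Rdiv; rewrite Rmult_1_l; apply Rinv_0_lt_compat; lra.
    - intros w _. assert (E : 1 / m1 * w ^ 2 + 0 * w ^ 2 + m1 / 4 - w = (w - m1 / 2) ^ 2 * / m1) by (field; lra).
      assert (0 <= (w - m1 / 2) ^ 2 * / m1). { apply Rmult_le_pos; [apply pow2_ge_0|]. left; apply Rinv_0_lt_compat; lra. }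
      lra. }
  destruct (Rle_lt_dec m2 0) as [Hn|Hn]; [|auto].
  assert (1 / m1 * m2 <= 0). { unfold Rdiv; rewrite Rmult_1_l. assert (0 < / m1) by (apply Rinv_0_lt_compat; lra). nra. }
  lra.
Qed.

Lemma cont_delta f x : continuity_pt f x -> forall eps, 0 < eps ->
  exists d, 0 < d /\ forall y, Rabs (y - x) < d -> Rabs (f y - f x) < eps.
Proof.
  intros Hc eps He. unfold continuity_pt, continue_in, limit1_in, limit_in in Hc.
  destruct (Hc eps He) as [d [Hd Hy]]. exists d. split; auto. intros y Hyx.
  destruct (Req_dec y x) as [->|Hn].
  - rewrite Rminus_diag, Rabs_R0. auto.
  - apply (Hy y). split. split; auto. unfold no_cond; auto. simpl. unfold R_dist. auto.
Qed.

Lemma core Q m1 m2 (HQ : quantile Q) (Hm1 : Expect Q (fun w => w) m1)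
  (Hm2 : Expect Q (fun w => w ^ 2) m2) (Hpos : 0 < m1) :
  forall eps, 0 < eps -> exists delta, 0 < delta /\
    forall beta B z, betac m1 m2 <= beta < betac m1 m2 + delta -> 0 < B < delta ->
      Zstar Q m1 beta B z -> z < eps.
Proof.
  intros eps Heps.
  assert (Hm2p : 0 < m2) by (eapply m2_pos; eauto).
  set (sc := m1 / m2).
  assert (Hsc : sinh (betac m1 m2) = sc).
  { unfold betac. replace (1 / (m2 / m1)) with sc by (unfold sc; field; lra). apply sinh_arcsinh. }
  assert (Hscp : 0 < sc) by (unfold sc, Rdiv; apply Rmult_lt_0_compat; [lra|apply Rinv_0_lt_compat; lra]).
  set (A := (2 / m2 + 1) * m1).
  assert (HA : 0 < A).
  { unfold A. apply Rmult_lt_0_compat; [|lra]. assert (0 < 2 / m2) by (unfold Rdiv; apply Rmult_lt_0_compat; [lra|apply Rinv_0_lt_compat; lra]). lra. }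
  set (eta := eps / (4 * A)).
  assert (Heta : 0 < eta) by (unfold eta, Rdiv; apply Rmult_lt_0_compat; [lra|apply Rinv_0_lt_compat; lra]).
  set (rho := tanh eta ^ 2).
  assert (Hrho : 0 < rho < 1).
  { pose proof (tanh_pos eta Heta). pose proof (tanh_bnd eta). unfold rho. split; nra. }
  destruct (cont_delta sinh (betac m1 m2) (derivable_continuous _ derivable_sinh _) (sc * rho / 2))
    as [d1 [Hd1 Hsinh]].
  { apply Rmult_lt_0_compat; [|lra]. apply Rmult_lt_0_compat; lra. }
  set (dB := rho * eps / (4 * A)).
  assert (HdB : 0 < dB) by (unfold dB, Rdiv; apply Rmult_lt_0_compat; [nra|apply Rinv_0_lt_compat; lra]).
  exists (Rmin d1 dB). split; [apply Rmin_pos; auto|].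
  intros beta B z [Hb1 Hb2] [HB1 HB2] [Hz Hlub].
  pose proof (Rmin_l d1 dB). pose proof (Rmin_r d1 dB).
  assert (Hsb : sinh beta <= sc * (1 + rho / 2)).
  { assert (Rabs (beta - betac m1 m2) < d1) by (rewrite Rabs_pos_eq; lra).
    specialize (Hsinh beta H1). rewrite Hsc in Hsinh. apply Rabs_def2 in Hsinh. lra. }
  assert (Hsb2 : sc <= sinh beta).
  { destruct Hb1 as [Hl|He]. - left; rewrite <- Hsc; apply sinh_lt; auto. - right; rewrite <- He; auto. }
  set (al := alpha m1 beta) in *.
  assert (Hal0 : 0 <= al) by (unfold al, alpha; apply sqrt_pos).
  assert (Hal2 : al * al = sinh beta / m1).
  { unfold al, alpha. apply sqrt_sqrt. unfold Rdiv. apply Rmult_le_pos; [lra|]. left; apply Rinv_0_lt_compat; lra. }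
  assert (Hc1 : 0 <= (1 - rho) * al * al * z).
  { apply Rmult_le_pos; [|lra]. apply Rmult_le_pos; [|lra]. apply Rmult_le_pos; lra. }
  assert (Hc2 : 0 <= (rho * eta + B) * al) by (apply Rmult_le_pos; nra).
  assert (Hpt : forall w, 0 <= w -> tanh (al * w * z + B) * al * w <=
      (1 - rho) * al * al * z * (w ^ 2) + (rho * eta + B) * al * w + 0).
  { intros w Hw.
      assert (Hx : 0 <= al * w * z) by (apply Rmult_le_pos; [apply Rmult_le_pos|]; lra).
      pose proof (tanh_addB (al * w * z) B Hx ltac:(lra)) as T1.
      pose proof (tanh_gap eta (al * w * z) Heta Hx) as T2. fold rho in T2.
      assert (Hc : tanh (al * w * z + B) <= (1 - rho) * (al * w * z) + rho * eta + B) by lra.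
      assert (Haw : 0 <= al * w) by (apply Rmult_le_pos; lra).
      replace (tanh (al * w * z + B) * al * w) with (tanh (al * w * z + B) * (al * w)) by ring.
      apply Rle_trans with (((1 - rho) * (al * w * z) + rho * eta + B) * (al * w)).
      + apply Rmult_le_compat_r; auto.
      + right; ring. }
  assert (Hineq := key Q (fun w => tanh (al * w * z + B) * al * w) (fun w => w ^ 2) (fun w => w) z m2 m1
     _ _ 0 HQ Hc1 Hc2 (Rle_refl 0) Hpt Hlub Hm2 Hm1).
  assert (Hr : al * al * m2 <= 1 + rho / 2).
  { rewrite Hal2. apply Rle_trans with (sc * (1 + rho / 2) / m1 * m2).
    - apply Rmult_le_compat_r; [lra|]. unfold Rdiv. apply Rmult_le_compat_r; auto. left; apply Rinv_0_lt_compat; lra.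
    - right. unfold sc. field. lra. }
  assert (Hal1 : al * m1 <= A).
  { unfold A. apply Rmult_le_compat_r; [lra|].
    assert (al * al <= 2 / m2).
    { apply (Rmult_le_reg_r m2); [lra|]. replace (2 / m2 * m2) with 2 by (field; lra). lra. }
    nra. }
  assert (Hr2 : (1 - rho) * al * al * z * m2 <= (1 - rho / 2) * z).
  { replace ((1 - rho) * al * al * z * m2) with (((1 - rho) * z) * (al * al * m2)) by ring.
    apply Rle_trans with (((1 - rho) * z) * (1 + rho / 2)).
    - apply Rmult_le_compat_l; [nra|auto].
    - nra. }
  assert (Hr3 : (rho * eta + B) * al * m1 <= (rho * eta + B) * A).
  { rewrite Rmult_assoc. apply Rmult_le_compat_l; [nra|auto]. }
  assert (Hfin : rho / 2 * z <= (rho * eta + B) * A) by lra.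
  assert (Hfin2 : (rho * eta + B) * A < rho * eps / 2).
  { assert (rho * eta * A = rho * eps / 4) by (unfold eta; field; lra).
    assert (B * A < dB * A) by (apply Rmult_lt_compat_r; lra).
    assert (dB * A = rho * eps / 4) by (unfold dB; field; lra).
    nra. }
  nra.
Qed.

Lemma lip_cont f K : 0 <= K -> (forall x y, Rabs (f y - f x) <= K * Rabs (y - x)) -> continuity f.
Proof.
  intros HK H x. unfold continuity_pt, continue_in, limit1_in, limit_in.
  intros eps He. exists (eps / (K + 1)). split.
  - unfold Rdiv; apply Rmult_lt_0_compat; [lra|apply Rinv_0_lt_compat; lra].
  - intros y [_ Hy]. simpl in *. unfold R_dist in *.
    apply Rle_lt_trans with (K * Rabs (y - x)); [apply H|].
    assert (0 <= Rabs (y - x)) by apply Rabs_pos.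
    assert (Rabs (y - x) * (K + 1) < eps).
    { apply (Rmult_lt_compat_r (K + 1)) in Hy; [|lra].
      replace (eps / (K + 1) * (K + 1)) with eps in Hy by (field; lra). lra. }
    nra.
Qed.

Lemma exist_sol Q m1 m2 (HQ : quantile Q) (Hm1 : Expect Q (fun w => w) m1)
  (Hm2 : Expect Q (fun w => w ^ 2) m2) (Hpos : 0 < m1) beta B :
  betac m1 m2 < beta -> 0 < B -> exists z, Zstar Q m1 beta B z.
Proof.
  intros Hb HB.
  assert (Hm2p : 0 < m2) by (eapply m2_pos; eauto).
  assert (Hsc : sinh (betac m1 m2) = m1 / m2).
  { unfold betac. replace (1 / (m2 / m1)) with (m1 / m2) by (field; lra). apply sinh_arcsinh. }
  assert (Hsb : 0 < sinh beta).
  { assert (0 < m1 / m2) by (unfold Rdiv; apply Rmult_lt_0_compat; [lra|apply Rinv_0_lt_compat; lra]).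
    pose proof (sinh_lt _ _ Hb). lra. }
  set (al := alpha m1 beta).
  assert (Hal : 0 < al).
  { unfold al, alpha. apply sqrt_lt_R0. unfold Rdiv; apply Rmult_lt_0_compat; [lra|apply Rinv_0_lt_compat; lra]. }
  set (g := fun z w => tanh (al * w * z + B) * al * w).
  assert (Hub : forall z x, lsums Q (g z) x -> x <= al * m1 + 0 * m1 + 0).
  { intros z. apply (key_ub Q (g z) (fun w => w) (fun w => w) m1 m1 al 0 0 HQ); auto; try lra.
    intros w Hw. unfold g. pose proof (tanh_bnd (al * w * z + B)).
    assert (0 <= al * w) by (apply Rmult_le_pos; lra).
    replace (tanh (al * w * z + B) * al * w) with (tanh (al * w * z + B) * (al * w)) by ring. nra. }
  assert (Hex : forall z, exists e, Expect Q (g z) e).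
  { intros z. destruct (completeness (lsums Q (g z))) as [e He].
    - exists (al * m1 + 0 * m1 + 0). intros x Hx. apply (Hub z x Hx).
    - exists (lsum (fun u => g z (Q u)) (1/2) (1/2) 0). exists (1/2), (1/2), 0%nat. split; [lra|split; [lra|split; [lra|reflexivity]]].
    - exists e; exact He. }
  set (F := fun z => proj1_sig (constructive_indefinite_description _ (Hex z))).
  assert (HF : forall z, Expect Q (g z) (F z)).
  { intros z. unfold F. destruct (constructive_indefinite_description _ (Hex z)); auto. }
  assert (HFl : forall z z', F z <= 1 * F z' + al * al * Rabs (z - z') * m2 + 0).
  { intros z z'. apply (key Q (g z) (g z') (fun w => w ^ 2)); auto; try lra.
    - assert (0 <= Rabs (z - z')) by apply Rabs_pos. apply Rmult_le_pos; [nra|auto].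
    - intros w Hw. unfold g.
      pose proof (tanh_lip (al * w * z + B) (al * w * z' + B)) as T.
      replace (al * w * z + B - (al * w * z' + B)) with ((al * w) * (z - z')) in T by ring.
      assert (Haw : 0 <= al * w) by (apply Rmult_le_pos; lra).
      rewrite Rabs_mult, (Rabs_pos_eq (al * w)) in T by auto.
      assert (T2 : tanh (al * w * z + B) <= tanh (al * w * z' + B) + al * w * Rabs (z - z')).
      { pose proof (Rle_abs (tanh (al * w * z + B) - tanh (al * w * z' + B))). lra. }
      replace (tanh (al * w * z + B) * al * w) with (tanh (al * w * z + B) * (al * w)) by ring.
      apply Rle_trans with ((tanh (al * w * z' + B) + al * w * Rabs (z - z')) * (al * w)).
      + apply Rmult_le_compat_r; auto.
      + right; ring. }
  set (K := al * al * m2).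
  assert (HK : 0 <= K) by (unfold K; apply Rmult_le_pos; nra).
  set (G := fun z => z - F z).
  assert (HG : continuity G).
  { apply (lip_cont G (1 + K)); [lra|]. intros x y. unfold G.
    pose proof (HFl x y). pose proof (HFl y x).
    rewrite Rabs_minus_sym in H.
    assert (al * al * Rabs (y - x) * m2 = K * Rabs (y - x)) by (unfold K; ring).
    assert (Rabs (F y - F x) <= K * Rabs (y - x)).
    { apply Rabs_le. split; lra. }
    replace (y - F y - (x - F x)) with ((y - x) + - (F y - F x)) by ring.
    apply Rle_trans with (Rabs (y - x) + Rabs (- (F y - F x))); [apply Rabs_triang|].
    rewrite Rabs_Ropp. lra. }
  assert (HF0 : 0 < F 0).
  { destruct (classic (exists x, lsums Q (fun w => w) x /\ 0 < x)) as [[x [Hx Hxp]]|Hn].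
    - destruct Hx as [a [b [n [Ha [Hab [Hb1 ->]]]]]].
      assert (E : lsum (fun u => g 0 (Q u)) a b n = (tanh B * al) * lsum (fun u => Q u) a b n + 0 * lsum (fun u => Q u) a b n + 0 * (b - a)).
      { apply lsum_lin. intros u. unfold g. replace (al * Q u * 0 + B) with B by ring. ring. }
      assert (lsum (fun u => g 0 (Q u)) a b n <= F 0).
      { destruct (HF 0) as [Hu _]. apply Hu. exists a, b, n. auto. }
      pose proof (tanh_pos B HB).
      assert (0 < tanh B * al * lsum (fun u => Q u) a b n) by (apply Rmult_lt_0_compat; [apply Rmult_lt_0_compat|]; auto).
      lra.
    - exfalso. destruct Hm1 as [_ Hl].
      assert (m1 <= 0).
      { apply Hl. intros x Hx. destruct (Rle_lt_dec x 0); auto. exfalso; apply Hn; exists x; auto. }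
      lra. }
  assert (HFY : F (al * m1 + 1) <= al * m1 + 0 * m1 + 0).
  { destruct (HF (al * m1 + 1)) as [_ Hl]. apply Hl. intros x Hx. apply (Hub _ x Hx). }
  destruct (IVT G 0 (al * m1 + 1) HG) as [z [Hz1 Hz2]].
  - assert (0 < al * m1) by (apply Rmult_lt_0_compat; auto). lra.
  - unfold G. lra.
  - unfold G. lra.
  - exists z. unfold G in Hz2. assert (Fz : F z = z) by lra.
    assert (z <> 0). { intros ->. lra. }
    split; [lra|]. pose proof (HF z) as Hfz. rewrite Fz in Hfz. exact Hfz.
Qed.

Theorem mainTheorem5 (Q : R -> R) (m1 m2 : R)
  (HQ : quantile Q)
  (Hm1 : Expect Q (fun w => w) m1)
  (Hm2 : Expect Q (fun w => w ^ 2) m2)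
  (Hpos : 0 < m1) :
  (* main claim *)
  (forall (beta B z : nat -> R),
     (forall l, beta (S l) <= beta l) ->
     (forall l, B (S l) <= B l) ->
     (forall l, betac m1 m2 <= beta l) ->
     (forall l, 0 < B l) ->
     Un_cv beta (betac m1 m2) ->
     Un_cv B 0 ->
     (forall l, Zstar Q m1 (beta l) (B l) (z l)) ->
     Un_cv z 0)
  /\
  (* lim_{B \searrow 0} z^*(beta_c, B) = 0 *)
  (forall eps, 0 < eps -> exists delta, 0 < delta /\
     forall B z, 0 < B < delta -> Zstar Q m1 (betac m1 m2) B z -> Rabs z < eps)
  /\
  (* lim_{beta \searrow beta_c} z^*(beta, 0+) = 0, where
     z^*(beta,0+) = L is the limit of z^*(beta,B) as B \searrow 0 *)
  (forall eps, 0 < eps -> exists delta, 0 < delta /\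
     forall beta L, betac m1 m2 < beta < betac m1 m2 + delta ->
       (forall eps', 0 < eps' -> exists d', 0 < d' /\
          forall B z, 0 < B < d' -> Zstar Q m1 beta B z -> Rabs (z - L) < eps') ->
       Rabs L < eps).
Proof.
  pose proof (core Q m1 m2 HQ Hm1 Hm2 Hpos) as Hc.
  split; [|split].
  - intros beta B z _ _ Hbc HBp Hcb HcB Hz eps He.
    destruct (Hc eps He) as [d [Hd Hcd]].
    destruct (Hcb d Hd) as [N1 HN1]. destruct (HcB d Hd) as [N2 HN2].
    exists (Nat.max N1 N2). intros n Hn. unfold R_dist. rewrite Rminus_0_r.
    assert (H1 := HN1 n ltac:(lia)). assert (H2 := HN2 n ltac:(lia)).
    unfold R_dist in H1, H2. apply Rabs_def2 in H1. apply Rabs_def2 in H2.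
    destruct (Hz n) as [Hzp Hzl].
    rewrite Rabs_pos_eq by lra.
    apply (Hcd (beta n) (B n) (z n)); auto.
    + split; [apply Hbc|lra].
    + split; [apply HBp|lra].
  - intros eps He. destruct (Hc eps He) as [d [Hd Hcd]]. exists d. split; auto.
    intros B z HB Hz. destruct Hz as [Hzp Hzl].
    rewrite Rabs_pos_eq by lra. apply (Hcd (betac m1 m2) B z); try lra. split; auto.
  - intros eps He. destruct (Hc (eps / 2) ltac:(lra)) as [d [Hd Hcd]]. exists d. split; auto.
    intros beta L Hb HL.
    destruct (HL (eps / 2) ltac:(lra)) as [d' [Hd' Hd'']].
    set (B := Rmin d d' / 2).
    assert (HB : 0 < B < Rmin d d').
    { assert (0 < Rmin d d') by (apply Rmin_pos; auto). unfold B; lra. }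
    pose proof (Rmin_l d d'). pose proof (Rmin_r d d').
    destruct (exist_sol Q m1 m2 HQ Hm1 Hm2 Hpos beta B ltac:(lra) ltac:(lra)) as [z Hz].
    assert (H1 := Hd'' B z ltac:(lra) Hz).
    assert (H2 : z < eps / 2) by (apply (Hcd beta B z); auto; lra).
    destruct Hz as [Hzp _].
    apply Rabs_def2 in H1. apply Rabs_def1; lra.
Qed.
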